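(* Let $v\ge1$, $n\ge1$, $\epsilon>0$, and let $(\mathcal{X},\mathcal{Y},\mathcal{I})$ be a $(v,b,r,\lambda)$-RPBD with $\mathcal{X}=\{1,\dots,v\}$. Let $Q(y|x)=\alpha e^\epsilon$ if $(x,y)\in\mathcal{I}$ and $Q(y|x)=\alpha$ otherwise, with $\alpha=\frac{1}{re^\epsilon+b-r}$. With $X_1,\dots,X_n$ i.i.d. $\sim P\in\Delta_v$ and $Y_i\sim Q(\cdot|X_i)$, the estimator $$\hat P_{n,x}(Y_1,\dots,Y_n)=\frac{1}{(r-\lambda)(e^\epsilon-1)}\left(\frac{N_x(Y_1,\dots,Y_n)}{n\alpha}-(\lambda e^\epsilon+(r-\lambda))\right),\quad N_x=\sum_{i=1}^n\mathbb{1}(Y_i\in\mathcal{I}_x),$$ is unbiased. Its risk under the squared loss is $$R_{v,n}(\ell_2^2,P,Q,\hat P_n)=\frac1n\left[\frac{re^\epsilon+(v-1)(\lambda e^\epsilon+r-\lambda)}{(r-\lambda)^2(e^\epsilon-1)^2v}\left[v(b-r)+(v-1)(r-\lambda)(e^\epsilon-1)\right]+\frac1v-\sum_{x\in\mathcal{X}}P_x^2\right],$$ and its worst-case risk is $$\sup_{P\in\Delta_v}R_{v,n}(\ell_2^2,P,Q,\hat P_n)=\frac{re^\epsilon+(v-1)(\lambda e^\epsilon+r-\lambda)}{(r-\lambda)^2(e^\epsilon-1)^2nv}\left[v(b-r)+(v-1)(r-\lambda)(e^\epsilon-1)\right],$$ attained when $P$ is the uniform distribution.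
   Context: $\Delta_v$ is the set of probability vectors on $\{1,\dots,v\}$. For an incidence structure $(\mathcal{X},\mathcal{Y},\mathcal{I})$, $\mathcal{I}\subset\mathcal{X}\times\mathcal{Y}$, let $\mathcal{I}_x=\{y:(x,y)\in\mathcal{I}\}$. For integers $v>0$, $b>r>\lambda\ge0$, a $(v,b,r,\lambda)$-RPBD (regular and pairwise-balanced design) is an incidence structure with $\mathcal{X},\mathcal{Y}$ nonempty finite, $|\mathcal{X}|=v$, $|\mathcal{Y}|=b$, $|\mathcal{I}_x|=r$ for all $x$, and $|\mathcal{I}_x\cap\mathcal{I}_{x'}|=\lambda$ for all $x\neq x'$. Risk: $R_{v,n}(\ell,P,Q,\hat P_n)=\mathbb{E}[\ell(P,\hat P_n(Y_1,\dots,Y_n))]$; $\ell_2^2(p,\hat p)=\sum_x(p_x-\hat p_x)^2$. *)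

(* Defs.v *)
From HB Require Import structures.
From mathcomp Require Import all_boot all_order all_algebra.
From mathcomp Require Import reals.
From mathcomp Require Import sequences exp.
Set Implicit Arguments. Unset Strict Implicit. Unset Printing Implicit Defensive.
Import Order.TTheory GRing.Theory Num.Theory.
Local Open Scope ring_scope.

Definition in_simplex (R : realType) (v : nat) (P : {ffun 'I_v -> R}) : Prop :=
  (forall x, 0 <= P x) /\ \sum_x P x = 1.

Definition is_RPBD (v b r lam : nat) (I : 'I_v -> 'I_b -> bool) : Prop :=
  [/\ (0 < v)%N, (r < b)%N, (lam < r)%N,
      (forall x, #|[set y | I x y]| = r) &
      (forall x x', x != x' -> #|[set y | I x y && I x' y]| = lam)].

Definition alphaQ (R : realType) (b r : nat) (eps : R) : R :=
  (r%:R * expR eps + (b%:R - r%:R))^-1.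

Definition Qch (R : realType) (v b r : nat) (eps : R) (I : 'I_v -> 'I_b -> bool)
  (x : 'I_v) (y : 'I_b) : R :=
  if I x y then alphaQ b r eps * expR eps else alphaQ b r eps.

Definition Ncount (v b n : nat) (I : 'I_v -> 'I_b -> bool)
  (ys : {ffun 'I_n -> 'I_b}) (x : 'I_v) : nat :=
  #|[set i : 'I_n | I x (ys i)]|.

Definition Phat (R : realType) (v b r lam n : nat) (eps : R)
  (I : 'I_v -> 'I_b -> bool) (ys : {ffun 'I_n -> 'I_b}) : {ffun 'I_v -> R} :=
  [ffun x => ((r%:R - lam%:R) * (expR eps - 1))^-1 *
     ((Ncount I ys x)%:R / (n%:R * alphaQ b r eps)
      - (lam%:R * expR eps + (r%:R - lam%:R)))].

Definition Exp (R : realType) (v b n : nat) (P : {ffun 'I_v -> R})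
  (Q : 'I_v -> 'I_b -> R) (F : {ffun 'I_n -> 'I_v} -> {ffun 'I_n -> 'I_b} -> R) : R :=
  \sum_(xs : {ffun 'I_n -> 'I_v}) \sum_(ys : {ffun 'I_n -> 'I_b})
     (\prod_(i : 'I_n) (P (xs i) * Q (xs i) (ys i))) * F xs ys.

Definition l22 (R : realType) (v : nat) (p q : {ffun 'I_v -> R}) : R :=
  \sum_x (p x - q x) ^+ 2.

Definition risk (R : realType) (v b n : nat)
  (loss : {ffun 'I_v -> R} -> {ffun 'I_v -> R} -> R)
  (P : {ffun 'I_v -> R}) (Q : 'I_v -> 'I_b -> R)
  (est : {ffun 'I_n -> 'I_b} -> {ffun 'I_v -> R}) : R :=
  Exp P Q (fun _ ys => loss P (est ys)).

Definition uniformP (R : realType) (v : nat) : {ffun 'I_v -> R} :=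
  [ffun _ => v%:R^-1].

Definition worst_risk (R : realType) (v b r lam n : nat) (eps : R) : R :=
  (r%:R * expR eps + (v%:R - 1) * (lam%:R * expR eps + r%:R - lam%:R)) /
  ((r%:R - lam%:R) ^+ 2 * (expR eps - 1) ^+ 2 * n%:R * v%:R) *
  (v%:R * (b%:R - r%:R) + (v%:R - 1) * (r%:R - lam%:R) * (expR eps - 1)).

(* Main.v *)
Require Import Defs.
From HB Require Import structures.
From mathcomp Require Import all_boot all_order all_algebra.
From mathcomp Require Import reals.
From mathcomp Require Import sequences exp.
From mathcomp Require Import ring lra.
Import Order.TTheory GRing.Theory Num.Theory.
Local Open Scope ring_scope.

Set Implicit Arguments. Unset Strict Implicit.


Lemma prod_sum (R : comNzRingType) n (J : finType) (h : 'I_n -> J -> R) :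
  \sum_(ys : {ffun 'I_n -> J}) \prod_i h i (ys i) = \prod_i \sum_y h i y.
Proof. by rewrite bigA_distr_bigA. Qed.

Lemma sum_ind_card (R : comNzRingType) (T : finType) (p : pred T) :
  \sum_i ((p i)%:R : R) = (#|[set i | p i]|)%:R.
Proof.
rewrite -sum1_card natr_sum [RHS]big_mkcond /=; apply: eq_bigr => i _.
by rewrite inE; case: (p i).
Qed.

Lemma Exp_marg (R : realType) v b n (P : {ffun 'I_v -> R}) (Q : 'I_v -> 'I_b -> R)
  (G : {ffun 'I_n -> 'I_b} -> R) :
  Exp P Q (fun _ ys => G ys) =
  \sum_(ys : {ffun 'I_n -> 'I_b}) (\prod_i (\sum_x P x * Q x (ys i))) * G ys.
Proof.
rewrite /Exp exchange_big /=; apply: eq_bigr => ys _.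
rewrite -mulr_suml; congr (_ * _).
by rewrite bigA_distr_bigA.
Qed.

Lemma E_prod (R : realType) n b (q : 'I_b -> R) (g : 'I_n -> 'I_b -> R) :
  \sum_(ys : {ffun 'I_n -> 'I_b}) (\prod_i q (ys i)) * \prod_i g i (ys i) =
  \prod_i \sum_y q y * g i y.
Proof.
rewrite -prod_sum; apply: eq_bigr => ys _; by rewrite big_split.
Qed.


Lemma prod_if1 (R : comNzRingType) n (i : 'I_n) (F : 'I_n -> R) :
  \prod_j (if j == i then F j else 1) = F i.
Proof. by rewrite -big_mkcond big_pred1_eq. Qed.

Lemma E_one (R : realType) n b (q : 'I_b -> R) : \sum_y q y = 1 ->
  \sum_(ys : {ffun 'I_n -> 'I_b}) (\prod_i q (ys i)) * 1 = 1.
Proof.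
move=> hq.
have E := E_prod q (fun (_ : 'I_n) _ => (1:R)); rewrite /= big1_eq in E; rewrite E.
by apply: big1 => i _; under eq_bigr do rewrite mulr1.
Qed.

Lemma E_t (R : realType) n b (q : 'I_b -> R) (A : pred 'I_b) (i : 'I_n) :
  \sum_y q y = 1 ->
  \sum_(ys : {ffun 'I_n -> 'I_b}) (\prod_i q (ys i)) * (A (ys i))%:R
  = \sum_y q y * (A y)%:R.
Proof.
move=> hq.
under eq_bigr => ys _ do rewrite -(prod_if1 i (fun j => ((A (ys j))%:R : R))).
rewrite (E_prod q (fun j y => if j == i then (A y)%:R else 1)).
rewrite -[RHS](prod_if1 i (fun _ => \sum_y q y * (A y)%:R)).
apply: eq_bigr => j _; case: (j == i) => //.
by under eq_bigr do rewrite mulr1.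
Qed.

Lemma E_tt (R : realType) n b (q : 'I_b -> R) (A : pred 'I_b) (i k : 'I_n) :
  \sum_y q y = 1 ->
  \sum_(ys : {ffun 'I_n -> 'I_b}) (\prod_i q (ys i)) * ((A (ys i))%:R * (A (ys k))%:R)
  = if i == k then \sum_y q y * (A y)%:R else (\sum_y q y * (A y)%:R) ^+ 2.
Proof.
move=> hq.
under eq_bigr => ys _ do rewrite -(prod_if1 i (fun j => ((A (ys j))%:R : R))) -(prod_if1 k (fun j => ((A (ys j))%:R : R))) -big_split.
rewrite (E_prod q (fun j y => (if j == i then (A y)%:R else 1) * (if j == k then (A y)%:R else 1))).
set p := \sum_y q y * (A y)%:R.
have h1 : \sum_y q y * 1 = 1 by under eq_bigr do rewrite mulr1.
case: (eqVneq i k) => [<-|ne].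
  rewrite -[RHS](prod_if1 i (fun _ => p)).
  apply: eq_bigr => j _; case: (j == i) => /=.
    by apply: eq_bigr => y _; case: (A y); rewrite ?mul1r ?mul0r.
  by rewrite -[RHS]h1; apply: eq_bigr => y _; rewrite !mulr1.
rewrite expr2 -[X in X * _](prod_if1 i (fun _ => p)) -[X in _ * X](prod_if1 k (fun _ => p)).
rewrite -big_split /=.
apply: eq_bigr => j _.
case: (eqVneq j i) => [->|nji]; first by rewrite (negPf ne) !mulr1; apply: eq_bigr => y _; rewrite mulr1.
case: (j == k); first by rewrite mul1r; apply: eq_bigr => y _; rewrite mul1r.
by rewrite [RHS]mulr1 -[RHS]h1; apply: eq_bigr => y _; rewrite !mulr1.
Qed.

Lemma E_N (R : realType) n b (q : 'I_b -> R) (A : pred 'I_b) :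
  \sum_y q y = 1 ->
  \sum_(ys : {ffun 'I_n -> 'I_b}) (\prod_i q (ys i)) * (\sum_i ((A (ys i))%:R : R))
  = n%:R * \sum_y q y * (A y)%:R.
Proof.
move=> hq.
under eq_bigr do rewrite mulr_sumr.
rewrite exchange_big /=.
under eq_bigr do rewrite (E_t _ _ hq).
by rewrite sumr_const card_ord mulr_natl.
Qed.

Lemma E_N2 (R : realType) n b (q : 'I_b -> R) (A : pred 'I_b) :
  \sum_y q y = 1 ->
  let p := \sum_y q y * (A y)%:R in
  \sum_(ys : {ffun 'I_n -> 'I_b}) (\prod_i q (ys i)) * (\sum_i ((A (ys i))%:R : R)) ^+ 2
  = n%:R * (n%:R * p ^+ 2 + (p - p ^+ 2)).
Proof.
move=> hq p.
under eq_bigr do rewrite expr2 mulr_suml mulr_sumr.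
rewrite exchange_big /=.
under eq_bigr => i _.
  under eq_bigr do rewrite !mulr_sumr.
  rewrite exchange_big /=.
  under eq_bigr do rewrite (E_tt _ _ _ hq).
  have -> : \sum_k (if i == k then p else p ^+ 2) = n%:R * p ^+ 2 + (p - p ^+ 2).
    rewrite (bigD1 i) //= eqxx.
    have -> : \sum_(k | k != i) (if i == k then p else p ^+ 2) = \sum_(k | k != i) p ^+ 2.
      by apply: eq_bigr => k; rewrite eq_sym => /negPf ->.
    rewrite sumr_const cardC1 card_ord mulr_natl.
    case: n i => [|m] i; first by case: i.
    by rewrite /= mulrSr; ring.
  over.
by rewrite (eq_bigr (fun _ => n%:R * p ^+ 2 + (p - p ^+ 2))) // sumr_const card_ord [RHS]mulr_natl.
Qed.


Lemma E_quad (R : comNzRingType) (T : finType) (w f : T -> R) a0 a1 a2 :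
  \sum_t w t * (a0 + a1 * f t + a2 * f t ^+ 2) =
  a0 * (\sum_t w t * 1) + a1 * (\sum_t w t * f t) + a2 * (\sum_t w t * f t ^+ 2).
Proof.
rewrite !mulr_sumr -!big_split /=; apply: eq_bigr => t _; ring.
Qed.


Lemma sum_if (R : comNzRingType) (T : finType) (P : T -> R) (x : T) (A B : R) :
  \sum_x' P x' * (if x' == x then A else B) = B * (\sum_x' P x') + (A - B) * P x.
Proof.
rewrite (bigD1 x) //= eqxx [in RHS](bigD1 x) //=.
have -> : \sum_(x' | x' != x) P x' * (if x' == x then A else B) = B * \sum_(x' | x' != x) P x'.
  by rewrite mulr_sumr; apply: eq_bigr => x' /negPf ->; rewrite mulrC.
ring.
Qed.

Unset Implicit Arguments.

Theorem theorem6 (R : realType) (v b r lam n : nat) (eps : R)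
  (I : 'I_v -> 'I_b -> bool) :
  (1 <= v)%N -> (1 <= n)%N -> 0 < eps -> @is_RPBD v b r lam I ->
  let Q := @Qch R v b r eps I in
  let est := @Phat R v b r lam n eps I in
  (* unbiasedness *)
  (forall P : {ffun 'I_v -> R}, @in_simplex R v P ->
     forall x : 'I_v, @Exp R v b n P Q (fun _ ys => est ys x) = P x) /\
  (* exact risk under squared loss *)
  (forall P : {ffun 'I_v -> R}, @in_simplex R v P ->
     @risk R v b n (@l22 R v) P Q est =
     n%:R^-1 *
       ((r%:R * expR eps + (v%:R - 1) * (lam%:R * expR eps + r%:R - lam%:R)) /
          ((r%:R - lam%:R) ^+ 2 * (expR eps - 1) ^+ 2 * v%:R) *
          (v%:R * (b%:R - r%:R) + (v%:R - 1) * (r%:R - lam%:R) * (expR eps - 1))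
        + v%:R^-1 - \sum_x P x ^+ 2)) /\
  (* worst-case risk: sup over the simplex, attained at the uniform distribution *)
  (forall P : {ffun 'I_v -> R}, @in_simplex R v P ->
     @risk R v b n (@l22 R v) P Q est <= @worst_risk R v b r lam n eps) /\
  @in_simplex R v (uniformP R v) /\
  @risk R v b n (@l22 R v) (uniformP R v) Q est = @worst_risk R v b r lam n eps.
Proof.
move=> hv hn heps [hv0 hrb hlr hr hl] Q est.
set e := expR eps.
set al := alphaQ b r eps.
have he1 : 1 < e by rewrite /e expR_gt1.
have hrpos : (0 < r)%N by apply: leq_ltn_trans (leq0n lam) hlr.
have hD : 0 < r%:R * e + (b%:R - r%:R).
  apply: addr_gt0; first by apply: mulr_gt0; [rewrite ltr0n | apply: lt_trans he1].
  by rewrite subr_gt0 ltr_nat.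
have hal : al = (r%:R * e + (b%:R - r%:R))^-1 by [].
have hal0 : al != 0 by rewrite hal invr_eq0 gt_eqF.
have hDal : al * (r%:R * e + (b%:R - r%:R)) = 1 by rewrite hal mulVf // gt_eqF.
have hn0 : n%:R != 0 :> R by rewrite pnatr_eq0 -lt0n.
have hvn0 : v%:R != 0 :> R by rewrite pnatr_eq0 -lt0n.
have hrl0 : r%:R - lam%:R != 0 :> R by rewrite subr_eq0 eqr_nat gtn_eqF.
have he0 : e - 1 != 0 by rewrite subr_eq0 gt_eqF.
have hQ : forall x y, Q x y = al + al * (e - 1) * (I x y)%:R.
  by move=> x y; rewrite /Q /Qch -/al -/e; case: (I x y) => /=; ring.
have hcard : forall x x', \sum_y ((I x y)%:R * (I x' y)%:R : R) = (if x' == x then r%:R else lam%:R).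
  move=> x x'.
  rewrite (eq_bigr (fun y => ((I x y && I x' y) : bool)%:R)); last first.
    by move=> y _; case: (I x y); case: (I x' y); rewrite ?mul1r ?mul0r.
  rewrite sum_ind_card; case: eqVneq => [->|ne].
    have -> : [set y | I x y && I x y] = [set y | I x y] by apply/setP => y; rewrite !inE andbb.
    by rewrite hr.
  by rewrite hl // eq_sym.
have hQs : forall x', \sum_y Q x' y = 1.
  move=> x'; under eq_bigr do rewrite hQ.
  rewrite big_split /= sumr_const card_ord -mulr_sumr sum_ind_card hr -[al *+ b]mulr_natr -[RHS]hDal; ring.
have hQt : forall x x', \sum_y Q x' y * (I x y)%:R = (if x' == x then al * r%:R + al * (e - 1) * r%:R else al * r%:R + al * (e - 1) * lam%:R).
  move=> x x'; under eq_bigr do rewrite hQ mulrDl -mulrA.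
  rewrite big_split /= -!mulr_sumr sum_ind_card hr.
  under eq_bigr do rewrite mulrC.
  by rewrite hcard; case: (x' == x).
set c := (r%:R - lam%:R) * (e - 1).
set d := r%:R + (e - 1) * lam%:R.
have hc0 : c != 0 by rewrite mulf_neq0.
have marg : forall P : {ffun 'I_v -> R}, in_simplex P ->
   \sum_y (\sum_x P x * Q x y) = 1 /\
   forall x, \sum_y (\sum_x' P x' * Q x' y) * (I x y)%:R = al * (d + c * P x).
  move=> P [hP0 hP1]; split.
    rewrite exchange_big /= -hP1; apply: eq_bigr => x _.
    by rewrite -mulr_sumr hQs mulr1.
  move=> x.
  under eq_bigr do rewrite mulr_suml.
  under eq_bigr do under eq_bigr do rewrite -mulrA.
  rewrite exchange_big /=.
  under eq_bigr do rewrite -mulr_sumr hQt.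
  by rewrite sum_if hP1 /d /c; ring.
pose Nf (ys : {ffun 'I_n -> 'I_b}) (x : 'I_v) := \sum_i ((I x (ys i))%:R : R).
pose a0 := - (c^-1 * (lam%:R * e + (r%:R - lam%:R))).
pose a1 := c^-1 / (n%:R * al).
have hest : forall ys x, est ys x = a0 + a1 * Nf ys x + 0 * Nf ys x ^+ 2.
  move=> ys x; rewrite /est /Phat ffunE /Ncount -sum_ind_card -/al -/e /a0 /a1 /Nf /c.
  ring.
split.
  move=> P hP x; have [hq1 hqx] := marg P hP.
  rewrite Exp_marg.
  under eq_bigr do rewrite hest.
  rewrite (E_quad (fun ys : {ffun 'I_n -> 'I_b} => \prod_i \sum_x0 P x0 * Q x0 (ys i))).
  rewrite (@E_one R n b (fun y => \sum_x0 P x0 * Q x0 y) hq1).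
  rewrite (@E_N R n b (fun y => \sum_x0 P x0 * Q x0 y) (I x) hq1) hqx /a0 /a1 /c /d.
  by field; rewrite hal0 hn0 he0 hrl0.
pose A0 := al * d * (1 - al * d) / (n%:R * (al * c) ^+ 2).
pose A1 := al * c * (1 - 2 * al * d) / (n%:R * (al * c) ^+ 2).
pose A2 : R := - n%:R^-1.
have hsq : forall t N, (t - (a0 + a1 * N + 0 * N ^+ 2)) ^+ 2 =
   (t - a0) ^+ 2 + (-2 * (t - a0) * a1) * N + a1 ^+ 2 * N ^+ 2.
  by move=> t N; ring.
have perx : forall P : {ffun 'I_v -> R}, in_simplex P -> forall x,
  \sum_(ys : {ffun 'I_n -> 'I_b}) (\prod_i \sum_x0 P x0 * Q x0 (ys i)) * (P x - est ys x) ^+ 2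
  = A0 + A1 * P x + A2 * P x ^+ 2.
  move=> P hP x; have [hq1 hqx] := marg P hP.
  under eq_bigr do rewrite hest hsq.
  rewrite (E_quad (fun ys : {ffun 'I_n -> 'I_b} => \prod_i \sum_x0 P x0 * Q x0 (ys i))).
  rewrite (@E_one R n b (fun y => \sum_x0 P x0 * Q x0 y) hq1).
  rewrite (@E_N R n b (fun y => \sum_x0 P x0 * Q x0 y) (I x) hq1).
  move: (@E_N2 R n b (fun y => \sum_x0 P x0 * Q x0 y) (I x) hq1) => /= ->.
  rewrite hqx /a0 /a1 /A0 /A1 /A2 /c /d.
  by field; rewrite hal0 hn0 he0 hrl0.
have hrisk : forall P : {ffun 'I_v -> R}, in_simplex P ->
     @risk R v b n (@l22 R v) P Q est =
     n%:R^-1 *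
       ((r%:R * e + (v%:R - 1) * (lam%:R * e + r%:R - lam%:R)) /
          ((r%:R - lam%:R) ^+ 2 * (e - 1) ^+ 2 * v%:R) *
          (v%:R * (b%:R - r%:R) + (v%:R - 1) * (r%:R - lam%:R) * (e - 1))
        + v%:R^-1 - \sum_x P x ^+ 2).
  move=> P hP; rewrite /risk Exp_marg /l22.
  under eq_bigr do rewrite mulr_sumr.
  rewrite exchange_big /=.
  under eq_bigr do rewrite perx //.
  rewrite !big_split /= sumr_const card_ord -!mulr_sumr hP.2 -[A0 *+ v]mulr_natr.
  rewrite /A0 /A1 /A2 /c /d hal.
  by field; rewrite hvn0 he0 hrl0 hn0 (gt_eqF hD).
have hS : forall P : {ffun 'I_v -> R}, in_simplex P -> v%:R^-1 <= \sum_x P x ^+ 2.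
  move=> P [_ hP1].
  have h0 : 0 <= \sum_x (P x - v%:R^-1) ^+ 2 by apply: sumr_ge0 => x _; exact: sqr_ge0.
  rewrite (eq_bigr (fun x => P x ^+ 2 + (-2 * v%:R^-1) * P x + v%:R^-1 ^+ 2)) in h0; last by move=> x _; ring.
  rewrite !big_split /= -mulr_sumr hP1 sumr_const card_ord -[v%:R^-1 ^+ 2 *+ v]mulr_natr in h0.
  have e1 : -2 * v%:R^-1 * 1 + v%:R^-1 ^+ 2 * v%:R = - v%:R^-1 :> R by field.
  by rewrite -addrA e1 in h0; rewrite -subr_ge0.
have hW : worst_risk v b r lam n eps = n%:R^-1 *
       ((r%:R * e + (v%:R - 1) * (lam%:R * e + r%:R - lam%:R)) /
          ((r%:R - lam%:R) ^+ 2 * (e - 1) ^+ 2 * v%:R) *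
          (v%:R * (b%:R - r%:R) + (v%:R - 1) * (r%:R - lam%:R) * (e - 1))
        + v%:R^-1 - v%:R^-1).
  by rewrite /worst_risk -/e; field; rewrite hvn0 he0 hrl0 hn0.
have hU : in_simplex (uniformP R v).
  split; first by move=> x; rewrite ffunE invr_ge0 ler0n.
  under eq_bigr do rewrite ffunE.
  by rewrite sumr_const card_ord -[_ *+ v]mulr_natr mulVf.
split; first exact: hrisk.
split.
  move=> P hP; rewrite hrisk // hW ler_pM2l ?invr_gt0 ?ltr0n // lerD2l lerN2.
  exact: hS.
split; first exact: hU.
rewrite hrisk // hW; congr (_ * (_ - _)).
under eq_bigr do rewrite ffunE.
by rewrite sumr_const card_ord -[_ *+ v]mulr_natr; field.
Qed.
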